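(* Let $P\in\mathfrak N_2$ and let $r:P\to R$ be a retraction onto a retract $R$ of width three which is a tower of nice sections. Suppose $\ell\in[0,h_R-1]$ satisfies $R(\ell)<R(\ell+1)$, and suppose there is $k\in[0,h_P-1]$ such that either (a) $R(\ell)=P(k)$, or (b) $R(\ell)\subsetneq P(k)$, $P(k)\cup P(k+1)$ is of type $3C$, and $r[P(k+1)]\subseteq R(\ell+1\to h_R)$. Then $k\le h_P-3$, $P(k+1)\cup P(k+2)$ is of type $3C$, and $r[P(k+1)]=R(\ell+1)\subseteq P(k+2)$.
   Context: All posets are finite; $h_P$ is the height; level sets $P(0)=\min P$, $P(k+1)=\min(P\setminus\bigcup_{i\le k}P(i))$; $P(k\to\ell)=\bigcup_{i=k}^\ell P(i)$; level sets of $R$ refer to $R$'s own levels. $A<B$ means $a<b$ for all $a\in A,b\in B$. A retraction $r:P\to R$ is an idempotent order-preserving self-map with image $R$. Type $3C$: three disjoint 2-element chains, no further comparabilities. A section is either a 2-element antichain or a poset $P$ of height $h_P\ge1$ with carrier $\{c_{k,j}:k\in[0,h_P],j\in\{0,1,2\}\}$ such that: $c_{0,j}<\dots<c_{h_P,j}$ for each $j$; each $\{c_{k,0},c_{k,1},c_{k,2}\}$ is an antichain; $c_{k,i}<c_{\ell,j}\Rightarrow c_{k,i+1}<c_{\ell,j+1}$ (indices mod 3); and for no $k$ is $P(k)<P(k+1)$ with both 3-element. A section is nice if for all $x<y$: $\{z:z>x\}\not\subseteq\{z:z\ge y\}$ and $\{z:z<y\}\not\subseteq\{z:z\le x\}$.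 A tower of nice sections is an ordinal sum of nice sections. $\mathfrak N_2$ is the class of nice sections of width three of height $\ge2$ with horizon 2, i.e. $P(k)<P(\ell)$ whenever $\ell\ge k+2$; consecutive level pairs are 6-crowns or of type $3C$. *)

(* Defs.v *)
From mathcomp Require Import all_boot all_order.
Set Implicit Arguments. Unset Strict Implicit. Unset Printing Implicit Defensive.
Import Order.TTheory.
Local Open Scope order_scope.

(* Finite posets are finPOrderType's; a subset S : {set T} is viewed as a
   subposet with the induced order. *)
Section PosetDefs.
Context {d : Order.disp_t} {T : finPOrderType d}.

Definition setlt (A B : {set T}) : bool :=
  [forall a in A, forall b in B, a < b].

Definition minimal (S : {set T}) : {set T} :=
  [set x in S | [forall y in S, ~~ (y < x)]].

Fixpoint remlev (S : {set T}) (k : nat) : {set T} :=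
  if k is k'.+1 then remlev S k' :\: minimal (remlev S k') else S.

Definition lev (S : {set T}) (k : nat) : {set T} := minimal (remlev S k).

Definition levrange (S : {set T}) (a b : nat) : {set T} :=
  \bigcup_(a <= i < b.+1) lev S i.

(* height: largest index of a nonempty level (levels beyond #|T| are empty) *)
Definition height (S : {set T}) : nat :=
  \big[maxn/0%N]_(i < #|T|.+1 | lev S i != set0) (i : nat).

Definition antichain (S : {set T}) : bool :=
  [forall x in S, forall y in S, ~~ (x < y)].

Definition width (S : {set T}) : nat :=
  \big[maxn/0%N]_(A : {set T} | (A \subset S) && antichain A) #|A|.

(* type 3C: three disjoint 2-element chains, no further comparabilities *)
Definition is3C (A : {set T}) : Prop :=
  exists f : 'I_3 * bool -> T,
    injective f /\ A = [set f u | u : 'I_3 * bool] /\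
    forall u v, (f u < f v) = [&& u.1 == v.1, ~~ u.2 & v.2].

Definition isSection (S : {set T}) : Prop :=
  (#|S| = 2 /\ antichain S) \/
  (1 <= height S)%N /\
  exists c : nat -> 'I_3 -> T,
    let h := height S in
    S = [set c (k : nat) j | k : 'I_h.+1, j : 'I_3] /\
    (forall k l i j, (k <= h)%N -> (l <= h)%N -> c k i = c l j -> k = l /\ i = j) /\
    (forall k j, (k < h)%N -> c k j < c k.+1 j) /\
    (forall k i j, (k <= h)%N -> i != j -> ~~ (c k i < c k j)) /\
    (forall k l i j, (k <= h)%N -> (l <= h)%N ->
        c k i < c l j -> c k (ordS i) < c l (ordS j)) /\
    ~ (exists k, (k < h)%N /\ #|lev S k| = 3 /\ #|lev S k.+1| = 3 /\
                 setlt (lev S k) (lev S k.+1)).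

Definition nice (S : {set T}) : Prop :=
  forall x y, x \in S -> y \in S -> x < y ->
    ~~ ([set z in S | x < z] \subset [set z in S | y <= z]) /\
    ~~ ([set z in S | z < y] \subset [set z in S | z <= x]).

Definition niceSection (S : {set T}) : Prop := isSection S /\ nice S.

Definition towerNice (S : {set T}) : Prop :=
  exists Q : seq {set T},
    S = \bigcup_(A <- Q) A /\
    (forall A, A \in Q -> niceSection A) /\
    (forall i j, (i < j)%N -> (j < size Q)%N -> setlt (nth set0 Q i) (nth set0 Q j)).

Definition inN2 (S : {set T}) : Prop :=
  niceSection S /\ width S = 3 /\ (2 <= height S)%N /\
  (forall k l, (k.+2 <= l)%N -> setlt (lev S k) (lev S l)).

Definition retraction (r : T -> T) (R : {set T}) : Prop :=
  (forall x, r (r x) = r x) /\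
  (forall x y, x <= y -> r x <= r y) /\
  R = [set r x | x : T].

End PosetDefs.

(* Main.v *)
Require Import Defs.
From mathcomp Require Import all_boot all_order zify.
Set Implicit Arguments. Unset Strict Implicit. Unset Printing Implicit Defensive.
Import Order.TTheory.
Local Open Scope order_scope.


Section Levels.
Context {d : Order.disp_t} {T : finPOrderType d}.
Implicit Types (S X Y : {set T}) (x y z : T).

Lemma minimal_sub S : minimal S \subset S.
Proof. by apply/subsetP => x; rewrite inE => /andP[]. Qed.

Lemma in_minimal S x : (x \in minimal S) = (x \in S) && [forall y in S, ~~ (y < x)].
Proof. by rewrite inE. Qed.

Lemma minimalP S x : reflect (x \in S /\ forall y, y \in S -> ~~ (y < x)) (x \in minimal S).
Proof.
rewrite in_minimal; apply: (iffP andP) => [[-> /forall_inP H]|[-> H]]; split => //.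
by apply/forall_inP.
Qed.

Lemma minimal_below S y : y \in S -> exists2 w, w \in minimal S & w <= y.
Proof.
move=> yS.
pose F := fun w => #|[set z in S | z < w]|.
have yP : (y \in S) && (y <= y) by rewrite yS lexx.
have [w /andP[wS wy] Hmin] := @arg_minnP T y (fun w => (w \in S) && (w <= y)) F yP.
exists w => //; apply/minimalP; split => // z zS; apply/negP => zw.
have := Hmin z; rewrite zS /= (le_trans (ltW zw) wy) => /(_ isT).
rewrite leqNgt => /negP; apply.
rewrite /F; apply: proper_card; apply/properP; split.
  apply/subsetP => t; rewrite !inE => /andP[-> tz] /=; exact: lt_trans tz zw.
by exists z; rewrite !inE ?zS ?zw //= ltxx.
Qed.

Lemma minimal0 S : (minimal S == set0) = (S == set0).
Proof.
apply/idP/idP => /eqP H; apply/eqP; last by apply/setP => x; rewrite inE H inE.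
apply/setP => y; rewrite inE; apply/negP => yS.
have [w] := minimal_below yS; by rewrite H inE.
Qed.

Lemma remlevS S k : remlev S k.+1 = remlev S k :\: minimal (remlev S k).
Proof. by []. Qed.

Lemma remlev_sub S k : remlev S k \subset S.
Proof. elim: k => //= k IH; exact: subset_trans (subsetDl _ _) IH. Qed.

Lemma remlev_decr S k m : (k <= m)%N -> remlev S m \subset remlev S k.
Proof.
move=> /subnKC <-; elim: (m - k)%N => [|n IH]; first by rewrite addn0.
by rewrite addnS /=; exact: subset_trans (subsetDl _ _) IH.
Qed.

Lemma remlev_add S a b : remlev S (a + b) = remlev (remlev S a) b.
Proof. by elim: b => [|b IH]; rewrite ?addn0 // addnS /= IH. Qed.

Lemma lev_sub_rem S k : lev S k \subset remlev S k.
Proof. exact: minimal_sub. Qed.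

Lemma lev_sub S k : lev S k \subset S.
Proof. exact: subset_trans (lev_sub_rem _ _) (remlev_sub _ _). Qed.

Lemma remlev0 k : remlev (set0 : {set T}) k = set0.
Proof.
by apply/eqP; rewrite -subset0; exact: remlev_sub.
Qed.

Lemma lev_set0 k : lev (set0 : {set T}) k = set0.
Proof. by apply/eqP; rewrite /lev remlev0 minimal0. Qed.

Lemma lev_disj S m n x : x \in lev S m -> x \in lev S n -> m = n.
Proof.
wlog mn : m n / (m <= n)%N.
  move=> H xm xn; case: (leqP m n) => [/H|/ltnW /H]; [exact | move=> H'].
  by rewrite (H' xn xm).
move=> xm xn; move: mn; rewrite leq_eqVlt => /orP[/eqP //|mn].
have := subsetP (remlev_decr S mn) x (subsetP (lev_sub_rem _ _) x xn).
by rewrite /= inE xm.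
Qed.

Lemma lev_lt S m n x y : x \in lev S m -> y \in lev S n -> x < y -> (m < n)%N.
Proof.
move=> xm yn xy; rewrite ltnNge; apply/negP => nm.
have xr := subsetP (remlev_decr S nm) x (subsetP (lev_sub_rem _ _) x xm).
by move: yn => /minimalP [_ /(_ x xr)]; rewrite xy.
Qed.

Lemma lev_le S m n x y : x \in lev S m -> y \in lev S n -> x <= y -> (m <= n)%N.
Proof.
move=> xm yn; rewrite le_eqVlt => /orP[/eqP E|xy].
  by subst; rewrite (lev_disj xm yn).
exact: ltnW (lev_lt xm yn xy).
Qed.

Lemma lev_antichain S m x y : x \in lev S m -> y \in lev S m -> ~~ (x < y).
Proof. by move=> xm ym; apply/negP => /(lev_lt xm ym); rewrite ltnn. Qed.

Lemma lev_pred S m z : z \in lev S m.+1 -> exists2 w, w \in lev S m & w < z.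
Proof.
move=> zm.
have zr : z \in remlev S m.+1 := subsetP (lev_sub_rem _ _) z zm.
move: (zr); rewrite /= inE => /andP[znm zr'].
have : ~~ [forall y in remlev S m, ~~ (y < z)].
  by apply/negP => H; move: znm; rewrite inE zr' H.
move=> /forall_inPn [y yr]; rewrite negbK => yz.
have [w wm wy] := minimal_below yr.
by exists w => //; exact: le_lt_trans wy yz.
Qed.

Lemma lev_below S m n z : (m <= n)%N -> z \in lev S n -> exists2 w, w \in lev S m & w <= z.
Proof.
move=> /subnKC <-; elim: (n - m)%N z => [|j IH] z.
  by rewrite addn0 => zm; exists z.
rewrite addnS => /lev_pred [w /IH [v vm vw] wz]; exists v => //.
exact: le_trans vw (ltW wz).
Qed.

Lemma remlev_card S m : remlev S m != set0 -> (m + #|remlev S m| <= #|S|)%N.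
Proof.
elim: m => [|m IH] /=; first by rewrite add0n.
move=> ne.
have ne' : remlev S m != set0.
  have /set0Pn [z] := ne; rewrite inE => /andP[_ zr]; by apply/set0Pn; exists z.
apply: leq_trans (IH ne'); rewrite addSn -addnS leq_add2l.
rewrite -(cardsID (minimal (remlev S m)) (remlev S m)).
rewrite (setIidPr (minimal_sub _)) addnC -addn1 leq_add2l.
by rewrite card_gt0 minimal0.
Qed.

Lemma lev_ne0_bound S m : lev S m != set0 -> (m < #|T|.+1)%N.
Proof.
move=> H.
have ne : remlev S m != set0 by rewrite -minimal0.
have := remlev_card ne.
have : (0 < #|remlev S m|)%N by rewrite card_gt0.
move=> h1 h2; rewrite ltnS; apply: leq_trans (max_card S).
by apply: leq_trans h2; rewrite -{1}(addn0 m) leq_add2l.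
Qed.

Lemma lev_exists S z : z \in S -> exists m, z \in lev S m.
Proof.
move=> zS.
have : z \notin remlev S #|T|.+1.
  apply/negP => zr.
  have ne : remlev S #|T|.+1 != set0 by apply/set0Pn; exists z.
  have := remlev_card ne; rewrite leqNgt => /negP; apply.
  apply: leq_trans (leq_addr _ _); rewrite ltnS; exact: max_card.
elim: #|T|.+1 => [|n IH]; first by rewrite /= zS.
rewrite /= inE negb_and negbK => /orP[zm|]; first by exists n.
exact: IH.
Qed.

Lemma height_ge S m : lev S m != set0 -> (m <= height S)%N.
Proof.
move=> H; have Hb := lev_ne0_bound H.
rewrite /height.
by apply: (@leq_bigmax_cond _ (fun i : 'I_#|T|.+1 => lev S i != set0) (fun i => (i:nat)) (Ordinal Hb)).
Qed.

Lemma lev_down S m n : (m <= n)%N -> lev S n != set0 -> lev S m != set0.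
Proof.
move=> mn /set0Pn [z zn]; have [w wm _] := lev_below mn zn.
by apply/set0Pn; exists w.
Qed.

Lemma height_lev S : (0 < height S)%N -> lev S (height S) != set0.
Proof.
rewrite /height => H.

case: (pickP (fun i : 'I_#|T|.+1 => lev S i != set0)) => [i0 Hi0|H0].
  rewrite (@bigop.bigmax_eq_arg _ i0 (fun i => lev S i != set0) (fun i => nat_of_ord i) Hi0); by case: arg_maxnP.
by move: H; rewrite big_pred0.
Qed.

Lemma lev_le_height S m : (m <= height S)%N -> (0 < height S)%N -> lev S m != set0.
Proof. by move=> mh hp; apply: lev_down mh (height_lev hp). Qed.

Lemma lev_gt_height S m : (height S < m)%N -> lev S m = set0.
Proof.
move=> H; apply/eqP; apply: contraTT H => /height_ge; by rewrite -leqNgt.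
Qed.

End Levels.


Section Sum.
Context {d : Order.disp_t} {T : finPOrderType d}.
Implicit Types (S X Y : {set T}) (x y z : T).

Lemma setltP X Y : reflect (forall x y, x \in X -> y \in Y -> x < y) (setlt X Y).
Proof.
apply: (iffP forall_inP) => [H x y xX yY|H x xX]; first by move/forall_inP: (H x xX); apply.
by apply/forall_inP => y; apply: H.
Qed.

Lemma setlt_disj X Y x : setlt X Y -> x \in X -> x \in Y -> False.
Proof. by move=> /setltP H xX xY; have := H x x xX xY; rewrite ltxx. Qed.

Lemma min_union X' Y : (forall x y, x \in X' -> y \in Y -> x < y) -> X' != set0 ->
  minimal (X' :|: Y) = minimal X'.
Proof.
move=> H ne; apply/setP => z; apply/minimalP/minimalP.
  move=> [zU Hz]; have zX : z \in X'.
    move: zU; rewrite inE => /orP[//|zY].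
    have /set0Pn [x xX] := ne; have := Hz x; rewrite inE xX (H x z xX zY) => /(_ isT).
    done.
  by split => // y yX; apply: Hz; rewrite inE yX.
move=> [zX Hz]; split; first by rewrite inE zX.
move=> y; rewrite inE => /orP[/Hz //|yY]; apply/negP => yz.
by have := lt_trans (H z y zX yY) yz; rewrite ltxx.
Qed.

Lemma remlev_union_step X Y m : setlt X Y -> remlev X m != set0 ->
  remlev (X :|: Y) m = remlev X m :|: Y ->
  remlev (X :|: Y) m.+1 = remlev X m.+1 :|: Y.
Proof.
move=> /setltP H ne E; rewrite /= E min_union //; last first.
  by move=> x y xr; apply: H; exact: subsetP (remlev_sub _ _) x xr.
apply/setP => z; rewrite !(in_setD, in_setU).
case zY: (z \in Y); rewrite ?orbT ?orbF //=.
case zm: (z \in minimal (remlev X m)) => //=.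
exfalso; have zX := subsetP (remlev_sub X m) z (subsetP (minimal_sub _) z zm).
by have := H z z zX zY; rewrite ltxx.
Qed.

Lemma remlev_empty S : remlev S #|T|.+1 = set0.
Proof.
apply/eqP; apply/negPn/negP => ne; have := remlev_card ne.
rewrite leqNgt => /negP; apply; apply: leq_trans (leq_addr _ _); rewrite ltnS.
exact: max_card.
Qed.

Lemma lev_union X Y : setlt X Y -> X != set0 ->
  exists N, [/\ (0 < N)%N, (forall m, (m < N)%N -> lev (X :|: Y) m = lev X m),
     (forall m, lev X (N + m) = set0) & (forall m, lev (X :|: Y) (N + m) = lev Y m)].
Proof.
move=> H ne.
have ex : exists n, remlev X n == set0 by exists #|T|.+1; rewrite remlev_empty.
pose N := ex_minn ex.
have [N0 minN] : remlev X N == set0 /\ forall n, remlev X n == set0 -> (N <= n)%N.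
  by rewrite /N; case: ex_minnP.
have lt_ne : forall m, (m < N)%N -> remlev X m != set0.
  move=> m mN; apply/negP => /minN; by rewrite leqNgt mN.
have Npos : (0 < N)%N by rewrite lt0n; apply/negP => /eqP N0'; move: N0; rewrite N0' /= (negbTE ne).
have Erem : forall m, (m <= N)%N -> remlev (X :|: Y) m = remlev X m :|: Y.
  elim => [//|m IH] mN; apply: remlev_union_step => //.
    exact: lt_ne.
  exact: IH (ltnW mN).
have EN : remlev (X :|: Y) N = Y by rewrite Erem // (eqP N0) set0U.
exists N; split => //.
- move=> m mN; rewrite /lev Erem ?(ltnW mN) // min_union //.
    by move=> x y xr; move/setltP: H; apply; exact: subsetP (remlev_sub _ _) x xr.
  exact: lt_ne.
- by move=> m; rewrite /lev remlev_add (eqP N0) remlev0 /minimal; apply/setP => z; rewrite !inE.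
- by move=> m; rewrite /lev remlev_add EN.
Qed.

Definition G1 S := forall m, lev S m != set0 -> (2 <= #|lev S m|)%N.
Definition G2 S := forall m, #|lev S m| = 3 -> setlt (lev S m) (lev S m.+1) ->
  (0 < m)%N /\ forall a, a \in lev S m -> exists2 a', a' \in lev S m.-1 & ~~ (a' < a).

Lemma G1_set0 : G1 (set0 : {set T}).
Proof. by move=> m; rewrite lev_set0 eqxx. Qed.

Lemma G2_set0 : G2 (set0 : {set T}).
Proof. by move=> m; rewrite lev_set0 cards0. Qed.

Lemma G_union X Y : setlt X Y -> X != set0 -> G1 X -> G2 X -> G1 Y -> G2 Y ->
  G1 (X :|: Y) /\ G2 (X :|: Y).
Proof.
move=> H ne g1X g2X g1Y g2Y.
have [N [Npos E1 E2 E3]] := lev_union H ne.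
have Elev : forall m, lev (X :|: Y) m = if (m < N)%N then lev X m else lev Y (m - N).
  move=> m; case: ifP => mN; first exact: E1.
  have := E3 (m - N); rewrite subnKC //; by rewrite leqNgt mN.
split.
  move=> m; rewrite Elev; case: ifP => _; [exact: g1X | exact: g1Y].
move=> m; rewrite (Elev m) (Elev m.+1).
case: (ltnP m N) => mN.
  have Em1 : lev (X :|: Y) m.-1 = lev X m.-1 by rewrite Elev ifT //; lia.
  case: (ltnP m.+1 N) => m1N.
    move=> c3 lt; have [mp Ha] := g2X m c3 lt; split => // a aX.
    by have [a' a'X na] := Ha a aX; exists a' => //; rewrite Em1.
  move=> c3 _.
  have lt0 : setlt (lev X m) (lev X m.+1).
    have -> : m.+1 = (N + 0)%N by lia.
    by rewrite E2; apply/setltP => x y _; rewrite inE.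
  have [mp Ha] := g2X m c3 lt0; split => // a aX.
  by have [a' a'X na] := Ha a aX; exists a' => //; rewrite Em1.
have -> : (m.+1 < N)%N = false by lia.
have -> : (m.+1 - N = (m - N).+1)%N by lia.
move=> c3 lt; have [mp Ha] := g2Y _ c3 lt; split; first by lia.
move=> a aY; have [a' a'Y na] := Ha a aY; exists a' => //.
rewrite Elev ifF; last by lia.
by have -> : (m.-1 - N = (m - N).-1)%N by lia.
Qed.

End Sum.


Lemma I3_cases (j j' : 'I_3) : [\/ j' = j, j' = ordS j | j' = ordS (ordS j)].
Proof.
case: j => [[|[|[|?]]] Hj] //; case: j' => [[|[|[|?]]] Hj'] //;
  first [ by apply: Or31; apply: val_inj | by apply: Or32; apply: val_inj | by apply: Or33; apply: val_inj ].
Qed.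

Lemma ordS3 (j : 'I_3) : ordS (ordS (ordS j)) = j.
Proof. by case: j => [[|[|[|?]]] Hj] //; apply: val_inj. Qed.

Lemma ordS_neq (j : 'I_3) : ordS j != j.
Proof. by case: j => [[|[|[|?]]] Hj]. Qed.

Lemma ordS2_neq (j : 'I_3) : ordS (ordS j) != j.
Proof. by case: j => [[|[|[|?]]] Hj]. Qed.

Lemma rel3_common (Rl : 'I_3 -> 'I_3 -> Prop) i j j1 j2 :
  (forall x, Rl x x) -> (forall x y, Rl x y -> Rl (ordS x) (ordS y)) ->
  Rl i j -> i != j -> j1 != j2 -> exists x, Rl x j1 /\ Rl x j2.
Proof.
move=> Hr Hs Hij nij n12.
have shift : forall f : 'I_3 -> 'I_3, (forall y, f (ordS y) = ordS (f y)) ->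
    Rl (f j) j -> forall y, Rl (f y) y.
  move=> f fc H y; case: (I3_cases j y) => ->; rewrite ?fc //.
    exact: Hs.
  by apply: (Hs); apply: (Hs).
case: (I3_cases j i) => Ei; first by rewrite Ei eqxx in nij.
  have H : forall y, Rl (ordS y) y.
    by apply: (shift (@ordS 3)) => //; rewrite -Ei.
  case: (I3_cases j1 j2) => E2; first by rewrite E2 eqxx in n12.
    by exists j2; split; [rewrite E2; apply: H | apply: Hr].
  exists j1; split; first exact: Hr.
  by have := H j2; rewrite E2 ordS3.
have H : forall y, Rl (ordS (ordS y)) y.
  by apply: (shift (fun y => ordS (ordS y))) => //; rewrite -Ei.
case: (I3_cases j1 j2) => E2; first by rewrite E2 eqxx in n12.
  exists j1; split; first exact: Hr.
  by have := H (ordS j1); rewrite ordS3 -E2.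
exists j2; split; last exact: Hr.
by have := H j2; rewrite E2 ordS3.
Qed.

Section SecFacts.
Context {d : Order.disp_t} {T : finPOrderType d}.
Variables (S : {set T}) (h : nat) (c : nat -> 'I_3 -> T).
Hypothesis HS : S = [set c (k : nat) j | k : 'I_h.+1, j : 'I_3].
Hypothesis Hinj : forall k l i j, (k <= h)%N -> (l <= h)%N -> c k i = c l j -> k = l /\ i = j.
Hypothesis Hch : forall k j, (k < h)%N -> c k j < c k.+1 j.
Hypothesis Hac : forall k i j, (k <= h)%N -> i != j -> ~~ (c k i < c k j).

Lemma sec_chain_le k l j : (k <= l <= h)%N -> c k j <= c l j.
Proof.
move=> /andP[kl lh].
have [n E] : exists n, l = (k + n)%N by exists (l - k)%N; rewrite subnKC.
subst l; clear kl; move: lh; elim: n => [|n IH] lh; first by rewrite addn0.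
rewrite addnS in lh *; apply: le_trans (IH (ltnW lh)) (ltW (Hch _ _)).
exact: lh.
Qed.

Lemma sec_ord k l i j : (k <= h)%N -> (l <= h)%N -> c k i < c l j -> (k < l)%N.
Proof.
move=> kh lh lt; rewrite ltnNge; apply/negP => lk.
have le1 : c l i <= c k i by apply: sec_chain_le; rewrite lk.
have lt2 := le_lt_trans le1 lt.
case: (eqVneq i j) => [E|nij].
  by subst; rewrite ltxx in lt2.
by move: (Hac lh nij); rewrite lt2.
Qed.

Lemma sec_le_ord k l i j : (k <= h)%N -> (l <= h)%N -> c k i <= c l j -> (k <= l)%N.
Proof.
move=> kh lh; rewrite le_eqVlt => /orP[/eqP E|lt].
  by have [-> _] := Hinj kh lh E.
exact: ltnW (sec_ord kh lh lt).
Qed.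

Definition Row k := [set c k j | j : 'I_3].

Lemma in_Row k x : (x \in Row k) = [exists j, x == c k j].
Proof.
apply/imsetP/existsP => [[j _ ->]|[j /eqP ->]]; by exists j.
Qed.

Lemma Row_card k : (k <= h)%N -> #|Row k| = 3.
Proof.
move=> kh; rewrite card_imset ?card_ord //.
by move=> i j /Hinj [] // _.
Qed.

Lemma sec_elem x : x \in S -> exists p j, (p <= h)%N /\ x = c p j.
Proof.
rewrite HS => /imset2P [p j _ _ ->]; exists (p : nat), j; split => //.
by rewrite -ltnS.
Qed.

Definition Up k := \bigcup_(p : 'I_h.+1 | (k <= p)%N) Row p.

Lemma in_Up k x : (x \in Up k) <-> exists p j, [/\ (k <= p)%N, (p <= h)%N & x = c p j].
Proof.
split.
  move=> /bigcupP [p kp /imsetP [j _ ->]]; exists (p : nat), j; split => //.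
  by rewrite -ltnS.
move=> [p [j [kp ph ->]]]; apply/bigcupP; exists (Ordinal (n:=h.+1) (m:=p) ph) => //.
by apply/imsetP; exists j.
Qed.

Lemma remlev_sec k : remlev S k = Up k.
Proof.
elim: k => [|k IH].
  apply/setP => x; apply/idP/idP.
    move/sec_elem => [p [j [ph ->]]]; apply/in_Up; by exists p, j.
  move/in_Up => [p [j [_ ph ->]]]; rewrite HS; apply/imset2P.
  by exists (Ordinal (n:=h.+1) (m:=p) ph) j.
rewrite /= IH.
apply/setP => x; rewrite in_setD; apply/idP/idP.
  move=> /andP[nm /in_Up [p [j [kp ph E]]]]; apply/in_Up; exists p, j; split => //.
  rewrite ltn_neqAle kp andbT; apply/eqP => E'; subst p.
  move: nm; rewrite in_minimal negb_and /= => /orP[|]; first by move/negP; apply; apply/in_Up; exists k, j.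
  move=> /forall_inPn [y /in_Up [q [i [kq qh ->]]]]; rewrite negbK => lt.
  by rewrite E in lt; have := sec_ord qh ph lt; rewrite ltnNge kq.
move=> /in_Up [p [j [kp ph ->]]]; apply/andP; split; last first.
  by apply/in_Up; exists p, j; split => //; exact: ltnW.
rewrite in_minimal negb_and; apply/orP; right.
apply/forall_inPn; exists (c k j).
  by apply/in_Up; exists k, j; split => //; apply: leq_trans ph; exact: ltnW.
have kh : (k < h)%N := leq_trans kp ph.
rewrite negbK; apply: (lt_le_trans (Hch j kh)); apply: sec_chain_le; by rewrite kp ph.
Qed.

Lemma lev_sec k : (k <= h)%N -> lev S k = Row k.
Proof.
move=> kh; rewrite /lev remlev_sec; apply/setP => x; apply/minimalP/idP.
  move=> [/in_Up [p [j [kp ph ->]]] Hm]; apply/imsetP; exists j => //.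
  case: (ltnP k p) => [kp'|pk]; last by have -> : p = k by apply/eqP; rewrite eqn_leq pk kp.
  have kh' : (k < h)%N := leq_trans kp' ph.
  have lt : c k j < c p j.
    apply: (lt_le_trans (Hch j kh')); apply: sec_chain_le; by rewrite kp' ph.
  have ck : c k j \in Up k by apply/in_Up; exists k, j; split => //; exact: ltnW kh'.
  by have := Hm _ ck; rewrite lt.
move=> /imsetP [j _ ->]; split; first by apply/in_Up; exists k, j.
move=> y /in_Up [q [i [kq qh ->]]]; apply/negP => lt.
by have := sec_ord qh kh lt; rewrite ltnNge kq.
Qed.

Lemma lev_sec_gt k : (h < k)%N -> lev S k = set0.
Proof.
move=> hk; rewrite /lev remlev_sec; apply/setP => x; rewrite in_set0; apply/negP.
move=> /minimalP [/in_Up [p [j [kp ph _]]] _]; move: (leq_trans kp ph); by rewrite leqNgt hk.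
Qed.

Hypothesis Hcyc : forall k l i j, (k <= h)%N -> (l <= h)%N ->
        c k i < c l j -> c k (ordS i) < c l (ordS j).
Hypothesis Hnf : ~ (exists k, (k < h)%N /\ #|lev S k| = 3 /\ #|lev S k.+1| = 3 /\
                 setlt (lev S k) (lev S k.+1)).

Lemma sec_nofull k j : (k < h)%N -> ~ (forall i, c k i < c k.+1 j).
Proof.
move=> kh H; apply: Hnf; exists k; split => //.
rewrite !lev_sec ?Row_card //; try exact: ltnW.
split => //; split => //.
have H1 : forall j', (forall i, c k i < c k.+1 j') -> forall i, c k i < c k.+1 (ordS j').
  move=> j' H' i; rewrite -(ord_predK i); apply: Hcyc => //; exact: ltnW.
apply/setltP => x y /imsetP [i _ ->] /imsetP [j' _ ->].
case: (I3_cases j j') => ->; [exact: H | exact: (H1 j H i) | exact: (H1 _ (H1 j H) i)].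
Qed.

End SecFacts.


Section Tower.
Context {d : Order.disp_t} {T : finPOrderType d}.
Implicit Types (S X Y : {set T}) (x y z : T).

Lemma antichain_lev S : antichain S -> lev S 0 = S /\ forall m, lev S m.+1 = set0.
Proof.
move=> /forall_inP H.
have E : minimal S = S.
  apply/setP => x; apply/minimalP/idP => [[]//|xS]; split => // y yS.
  by move/forall_inP: (H y yS); apply.
split; first by rewrite /lev /= E.
move=> m; have -> : m.+1 = (1 + m)%N by [].
rewrite /lev remlev_add /= E setDv remlev0; apply/setP => x; by rewrite !inE.
Qed.

Lemma section_ne S : isSection S -> S != set0.
Proof.
case=> [[c2 _]|[_ [c [HS _]]]]; first by rewrite -card_gt0 c2.
apply/set0Pn; exists (c 0%N ord0); rewrite HS; apply/imset2P.
by exists ord0 ord0.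
Qed.

Lemma section_G S : isSection S -> G1 S /\ G2 S.
Proof.
case=> [[c2 ac]|[h1 [c [HS [Hinj [Hch [Hac [Hcyc Hnf]]]]]]]].
  have [E0 E1] := antichain_lev ac.
  split => [[|m]|[|m]]; rewrite ?E0 ?E1 ?c2 ?cards0 ?eqxx //.
move: HS Hinj Hch Hac Hcyc Hnf; set h := height S => HS Hinj Hch Hac Hcyc Hnf.
have Ele := lev_sec HS Hch Hac.
have Egt := lev_sec_gt HS Hch Hac.
have Rc := Row_card Hinj.
split.
  move=> m; case: (leqP m h) => mh; first by rewrite Ele // Rc.
  by rewrite Egt // eqxx.
move=> m; case: (leqP m h) => mh; last by rewrite Egt // cards0.
move: mh; rewrite leq_eqVlt => /orP[/eqP mh|mh]; last first.
  move=> c3 lt; exfalso; apply: Hnf; exists m; split => //; split => //.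
  by split => //; rewrite Ele // Rc.
subst m => _ _; split; first exact: h1.
move=> a; rewrite Ele // => /imsetP [j _ ->].
have hp : (h.-1 < h)%N by rewrite prednK // ltnSn.
have nf := sec_nofull HS Hinj Hch Hac Hcyc Hnf (j := j) hp.
have : ~~ [forall i, c h.-1 i < c h.-1.+1 j].
  by apply/negP => /forallP H; apply: nf => i; apply: H.
move=> /forallPn [i ni]; exists (c h.-1 i).
  by rewrite Ele ?leq_pred //; apply/imsetP; exists i.
by rewrite prednK // in ni.
Qed.

Lemma in_bigcup_seq (Q : seq {set T}) y :
  y \in \bigcup_(A <- Q) A -> exists2 A, A \in Q & y \in A.
Proof.
elim: Q => [|A Q IH]; first by rewrite big_nil inE.
rewrite big_cons inE => /orP[yA|/IH [B BQ yB]]; first by exists A => //; rewrite inE eqxx.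
by exists B => //; rewrite inE BQ orbT.
Qed.

Lemma tower_G (R : {set T}) : towerNice R -> G1 R /\ G2 R.
Proof.
move=> [Q [-> [HQ Hlt]]].
elim: Q HQ Hlt => [|A Q IH] HQ Hlt.
  by rewrite big_nil; split => m; rewrite lev_set0 ?eqxx ?cards0.
rewrite big_cons.
have [sA nA] : isSection A /\ nice A by apply: HQ; rewrite inE eqxx.
have [g1A g2A] := section_G sA.
have [g1Q g2Q] : G1 (\bigcup_(B <- Q) B) /\ G2 (\bigcup_(B <- Q) B).
  apply: IH.
    by move=> B BQ; apply: HQ; rewrite inE BQ orbT.
  by move=> i j ij jQ; have := Hlt i.+1 j.+1 ij jQ.
apply: G_union => //; last exact: section_ne.
apply/setltP => x y xA /in_bigcup_seq [B BQ yB].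
have := Hlt 0%N (index B Q).+1 (ltn0Sn _); rewrite /= ltnS index_mem BQ nth_index // => /(_ isT).
by move/setltP; apply.
Qed.

End Tower.


Section Main.
Context {d : Order.disp_t} {T : finPOrderType d}.
Implicit Types (S X Y : {set T}) (x y z : T).

Lemma is3C_below (U : {set T}) x y z : is3C U -> x \in U -> y \in U -> z \in U ->
  x < z -> y < z -> x = y.
Proof.
move=> [f [finj [UE Hf]]]; rewrite UE => /imsetP [u _ ->] /imsetP [v _ ->] /imsetP [w _ ->].
rewrite !Hf => /and3P [/eqP e1 n1 _] /and3P [/eqP e2 n2 _].
by congr f; case: u e1 n1 => u1 [] //= -> _; case: v e2 n2 => v1 [] //= -> _.
Qed.

Lemma in_bigU (I : eqType) (s : seq I) (F : I -> {set T}) y :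
  y \in \bigcup_(i <- s) F i -> exists2 i, i \in s & y \in F i.
Proof.
elim: s => [|a s IH]; first by rewrite big_nil inE.
rewrite big_cons inE => /orP[yA|/IH [b bs yb]]; first by exists a => //; rewrite inE eqxx.
by exists b => //; rewrite inE bs orbT.
Qed.

Lemma in_levrange (R : {set T}) a b y : y \in levrange R a b ->
  exists m, [/\ (a <= m)%N, (m <= b)%N & y \in lev R m].
Proof.
rewrite /levrange => /in_bigU [m]; rewrite mem_index_iota => /andP[am mb] ym.
by exists m; split.
Qed.

End Main.

Unset Implicit Arguments.

Theorem lemma5p3 (d : Order.disp_t) (T : finPOrderType d)
  (r : T -> T) (R : {set T}) (l k : nat) :
  inN2 [set: T] ->
  retraction r R ->
  width R = 3 ->
  towerNice R ->
  (l < height R)%N ->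
  setlt (lev R l) (lev R l.+1) ->
  (k < height [set: T])%N ->
  (lev R l = lev [set: T] k \/
   [/\ lev R l \proper lev [set: T] k,
       is3C (lev [set: T] k :|: lev [set: T] k.+1)
     & r @: lev [set: T] k.+1 \subset levrange R l.+1 (height R)]) ->
  [/\ (k + 3 <= height [set: T])%N,
      is3C (lev [set: T] k.+1 :|: lev [set: T] k.+2),
      r @: lev [set: T] k.+1 = lev R l.+1
    & lev R l.+1 \subset lev [set: T] k.+2].
Proof.
move=> [[secP niceP] [_ [h2 hor]]] [rid [rmono RE]] _ tow lh AB kh Hcase.
have [g1 g2] := tower_G tow.
set P := [set: T] in secP niceP h2 hor kh Hcase *.
case: secP => [[c2 ac]|[h1 [c [HS [Hinj [Hch [Hac [Hcyc Hnf]]]]]]]].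
  have [_ E1] := antichain_lev ac.
  have := height_lev (leq_trans (isT : (0 < 2)%N) h2).
  by move: h2; case: (height P) => [|m] //; rewrite E1 eqxx.
move: HS Hinj Hch Hac Hcyc Hnf; set h := height P => HS Hinj Hch Hac Hcyc Hnf.
have Ele := lev_sec HS Hch Hac.
have Rc := Row_card Hinj.
have ord := sec_ord Hch Hac.
have leord := sec_le_ord Hinj Hch Hac.
have elem : forall x, exists p j, (p <= h)%N /\ x = c p j.
  by move=> x; apply: (sec_elem HS); rewrite /P inE.
have horc : forall p q i j, (p.+2 <= q)%N -> (q <= h)%N -> c p i < c q j.
  move=> p q i j pq qh; have := hor p q pq; rewrite !Ele //; last by lia.
  by move/setltP; apply; apply/imsetP; [exists i | exists j].
have rR : forall x, r x \in R by move=> x; rewrite RE; apply/imsetP; exists x.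
have fixR : forall z, z \in R -> r z = z.
  by move=> z; rewrite RE => /imsetP [x _ ->]; rewrite rid.
have levR : forall m z, z \in lev R m -> z \in R by move=> m z; apply/subsetP/lev_sub.
have hRp : (0 < height R)%N by lia.
have Bne : lev R l.+1 != set0 by apply: lev_le_height.
have Ane : lev R l != set0 by apply: lev_le_height => //; lia.
have B2 := g1 _ Bne.
have A2 := g1 _ Ane.
have AB' := setltP _ _ AB.
have kh' : (k <= h)%N by lia.
have ARow : lev R l \subset Row c k.
  by case: Hcase => [->|[/properP [sub _] _ _]]; rewrite -Ele.
have /card_gt1P [a1 [a2 [a1A a2A a12]]] := A2.
have inRow : forall k' x, (x \in Row c k') = [exists j, x == c k' j] by move=> k' x; exact: in_Row.
have rowE : forall k' x, x \in Row c k' -> exists j, x = c k' j.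
  by move=> k' x; rewrite inRow => /existsP [j /eqP ->]; exists j.
have Bhigh : forall b p j, b \in lev R l.+1 -> (p <= h)%N -> b = c p j -> (k.+2 <= p)%N.
  move=> b p j bB ph Eb.
  have [i1 Ea1] := rowE _ _ (subsetP ARow _ a1A).
  have kp : (k < p)%N by apply: (ord k p i1 j) => //; rewrite -Ea1 -Eb; apply: AB'.
  rewrite ltn_neqAle kp andbT; apply/negP => /eqP Ep; subst p.
  case: Hcase => [EA|[_ H3C _]].
    apply: (sec_nofull HS Hinj Hch Hac Hcyc Hnf (j := j) kh) => i.
    by rewrite -Eb; apply: AB' => //; rewrite EA Ele //; apply/imsetP; exists i.
  move/eqP: a12; apply; apply: (is3C_below H3C (z := b)).
  - by rewrite inE; apply/orP; left; rewrite Ele //; exact: subsetP ARow _ a1A.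
  - by rewrite inE; apply/orP; left; rewrite Ele //; exact: subsetP ARow _ a2A.
  - by rewrite inE; apply/orP; right; rewrite Ele // Eb; apply/imsetP; exists j.
  - exact: AB'.
  - exact: AB'.
have Urow : forall m z, (l.+1 <= m)%N -> z \in lev R m ->
    exists2 b, b \in lev R l.+1 & b <= z.
  by move=> m z lm zm; apply: (lev_below lm zm).
have S4 : forall j, exists m, (l.+1 <= m)%N /\ r (c k.+1 j) \in lev R m.
  move=> j; case: Hcase => [EA|[_ _ Hsub]]; last first.
    have mem : r (c k.+1 j) \in r @: lev P k.+1.
      by rewrite Ele //; apply: imset_f; apply/imsetP; exists j.
    move: (subsetP Hsub _ mem) => /in_levrange [m [lm _ rm]].
    by exists m.
  have [m rm] := lev_exists (rR (c k.+1 j)).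
  case: (leqP l.+1 m) => lm; first by exists m.
  exfalso.
  have a0A : c k j \in lev R l by rewrite EA Ele //; apply/imsetP; exists j.
  have a0x : c k j < c k.+1 j by apply: Hch.
  have a0r : c k j <= r (c k.+1 j) by rewrite -(fixR _ (levR _ _ a0A)); apply: rmono; exact: ltW.
  have Eml : m = l by have := lev_le a0A rm a0r; clear -lm; lia.
  subst m.
  have Er : r (c k.+1 j) = c k j.
    move: a0r; rewrite le_eqVlt => /orP[/eqP -> //|lt].
    by have := lev_lt a0A rm lt; rewrite ltnn.
  have c3 : #|lev R l| = 3 by rewrite EA Ele // Rc.
  have [lp Ha] := g2 l c3 AB.
  have [a'' a''m na] := Ha _ a0A.
  have [p [i [ph Ea'']]] := elem a''.
  case: (ltnP k p) => kp.
    have [a' a'A a'lt] : exists2 a', a' \in lev R l & a' < a''.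
      case: (eqVneq p k.+1) => [Ep|Ep].
        exists (c k i); first by rewrite EA Ele //; apply/imsetP; exists i.
        by rewrite Ea'' Ep; apply: Hch.
      exists (c k i); first by rewrite EA Ele //; apply/imsetP; exists i.
      by rewrite Ea''; apply: horc => //; clear -kp Ep; lia.
    by have := lev_lt a'A a''m a'lt; clear; lia.
  case: (eqVneq p k) => [Ep|Ep].
    have : a'' \in lev R l by rewrite EA Ele // Ea'' Ep; apply/imsetP; exists i.
    by move/(lev_disj a''m); clear -lp; lia.
  have a''x : a'' < c k.+1 j by rewrite Ea''; apply: horc => //; clear -kp Ep; lia.
  have : a'' <= c k j.
    by rewrite -Er -(fixR _ (levR _ _ a''m)); apply: rmono; exact: ltW.
  rewrite le_eqVlt (negbTE na) orbF => /eqP E.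
  by rewrite E in a''m; have := lev_disj a''m a0A; clear -lp; lia.
have Bac : forall b b', b \in lev R l.+1 -> b' \in lev R l.+1 -> b' <= b -> b' = b.
  move=> b b' bB b'B; rewrite le_eqVlt => /orP[/eqP //|lt].
  by have := lev_antichain b'B bB; rewrite lt.
have S5 : forall b, b \in lev R l.+1 -> exists j, b = c k.+2 j.
  move=> b bB; have [p [j [ph Eb]]] := elem b.
  have kp := Bhigh _ _ _ bB ph Eb.
  case: (eqVneq p k.+2) => [Ep|Ep]; first by exists j; rewrite Eb Ep.
  exfalso.
  have Hx : forall j', r (c k.+1 j') = b.
    move=> j'; have xb : c k.+1 j' < b by rewrite Eb; apply: horc => //; clear -kp Ep; lia.
    have rxb : r (c k.+1 j') <= b by rewrite -(fixR _ (levR _ _ bB)); apply: rmono; exact: ltW.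
    have [m [lm rm]] := S4 j'.
    have [b' b'B b'r] := Urow _ _ lm rm.
    have Eb' := Bac _ _ bB b'B (le_trans b'r rxb).
    by apply/eqP; rewrite eq_le rxb -Eb'.
  have /card_gt1P [y1 [y2 [y1B y2B y12]]] := B2.
  have [b2 b2B nb2] : exists2 b2, b2 \in lev R l.+1 & b2 != b.
    case: (eqVneq y1 b) => [E1|]; last by exists y1.
    by exists y2 => //; rewrite -E1 eq_sym.
  have [q [i [qh Eb2]]] := elem b2.
  have kq := Bhigh _ _ _ b2B qh Eb2.
  have x2b2 : c k.+1 i < b2.
    rewrite Eb2; case: (eqVneq q k.+2) => [Eq|Eq]; first by rewrite Eq; apply: Hch; rewrite -Eq.
    by apply: horc => //; clear -kq Eq; lia.
  have : b <= b2 by rewrite -(Hx i) -(fixR _ (levR _ _ b2B)); apply: rmono; exact: ltW.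
  by move/(Bac _ _ b2B bB) => E; move: nb2; rewrite E eqxx.
have k2h : (k.+2 <= h)%N.
  have /set0Pn [b bB] := Bne.
  have [p [j' [ph Eb']]] := elem b.
  by apply: leq_trans (Bhigh _ _ _ bB ph Eb') ph.
have S6 : forall j, r (c k.+1 j) \in lev R l.+1.
  move=> j; have [m [lm rm]] := S4 j.
  case: (eqVneq m l.+1) => [<- //|Em]; exfalso.
  have lm2 : (l.+2 <= m)%N by clear -lm Em; lia.
  have ne2 : lev R l.+2 != set0 by apply: (lev_down lm2); apply/set0Pn; exists (r (c k.+1 j)).
  have sub : lev R l.+2 \subset [set r (c k.+1 j)].
    apply/subsetP => w wm; rewrite inE; apply/eqP.
    have [b bB bw] := lev_below (leqnSn l.+1) wm.
    have [jb Eb] := S5 _ bB.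
    have [q [i [qh Ew]]] := elem w.
    have nbw : b != w by apply/negP => /eqP E; rewrite E in bB; have := lev_disj bB wm; clear; lia.
    have bw' : b < w by rewrite lt_neqAle nbw bw.
    have kq : (k.+2 < q)%N by apply: (ord _ _ jb i) => //; rewrite -Eb -Ew.
    have xw : c k.+1 j < w by rewrite Ew; apply: horc => //; clear -kq; lia.
    have rxw : r (c k.+1 j) <= w by rewrite -(fixR _ (levR _ _ wm)); apply: rmono; exact: ltW.
    move: rxw; rewrite le_eqVlt => /orP[/eqP -> //|lt].
    by have := lev_lt rm wm lt; clear -lm2; lia.
  have := subset_leq_card sub; rewrite cards1 => c1.
  by have := g1 _ ne2; clear -c1; lia.
have S7 : r @: lev P k.+1 = lev R l.+1.
  apply/eqP; rewrite eqEsubset; apply/andP; split.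
    apply/subsetP => y; rewrite Ele // => /imsetP [x /imsetP [j _ ->] ->]; exact: S6.
  apply/subsetP => b bB; have [j Eb] := S5 _ bB.
  rewrite Ele //; apply/imsetP; exists (c k.+1 j); first by apply/imsetP; exists j.
  apply: esym; apply: (Bac _ _ bB (S6 j)).
  by rewrite -(fixR _ (levR _ _ bB)) Eb; apply: rmono; apply: ltW; apply: Hch.
have nodiag : forall i j, c k.+1 i < c k.+2 j -> i = j.
  move=> i j lt; apply/eqP/negP => nij; move/negP: nij => nij.
  have /card_gt1P [b1 [b2 [b1B b2B b12]]] := B2.
  have [j1 E1] := S5 _ b1B; have [j2 E2] := S5 _ b2B.
  have n12 : j1 != j2 by apply: contraNneq b12 => E; rewrite E1 E2 E.
  have [x [x1 x2]] := rel3_common (Rl := fun x y => c k.+1 x < c k.+2 y)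
     (fun x => Hch _ x k2h) (fun x y H => Hcyc _ _ _ _ (ltnW k2h) k2h H) lt nij n12.
  have e1 : r (c k.+1 x) = b1.
    apply: (Bac _ _ b1B (S6 x)); rewrite -(fixR _ (levR _ _ b1B)) E1; apply: rmono; exact: ltW.
  have e2 : r (c k.+1 x) = b2.
    apply: (Bac _ _ b2B (S6 x)); rewrite -(fixR _ (levR _ _ b2B)) E2; apply: rmono; exact: ltW.
  by move: b12; rewrite -e1 -e2 eqxx.
have k3h : (k + 3 <= h)%N.
  rewrite addn3; case: (eqVneq h k.+2) => [Eh|Eh]; last by clear -k2h Eh; lia.
  exfalso.
  have [H1 _] := niceP (c k.+1 ord0) (c k.+2 ord0) (in_setT _) (in_setT _) (Hch _ ord0 k2h).
  move/negP: H1; apply; apply/subsetP => z; rewrite !inE => xz.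
  have [q [i [qh Ez]]] := elem z.
  have kq : (k.+1 < q)%N by apply: (ord _ _ ord0 i (ltnW k2h) qh); rewrite -Ez.
  have Eq : q = k.+2 by clear -kq qh Eh; lia.
  subst q; rewrite Ez in xz *; have := nodiag _ _ xz => <-; exact: lexx.
split => //.
- have rowle : forall b : bool, ((if b then k.+2 else k.+1) <= h)%N.
    by case => //; exact: ltnW.
  have samerow : forall p i j, (p <= h)%N -> (c p i < c p j) = false.
    move=> p i j ph; apply/negbTE; case: (eqVneq i j) => [->|nij]; first by rewrite ltxx.
    exact: Hac.
  exists (fun u : 'I_3 * bool => c (if u.2 then k.+2 else k.+1) u.1); split; last split.
  + move=> [u1 u2] [v1 v2] /= E.
    have [Ek Ei] := Hinj _ _ _ _ (rowle u2) (rowle v2) E; subst v1.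
    by move: E; case: u2 Ek; case: v2 => //= Ek; move: Ek; clear; lia.
  + apply/setP => z; rewrite inE !Ele //; apply/orP/imsetP.
      by case=> /imsetP [j _ ->]; [exists (j, false) | exists (j, true)].
    by case=> [[u1 []] _ ->]; [right | left]; apply/imsetP; exists u1.
  + move=> [u1 []] [v1 []] /=.
    * by rewrite samerow ?andbF.
    * rewrite ?andbF; apply/negbTE/negP => /(ord _ _ _ _ k2h (ltnW k2h)); clear; lia.
    * rewrite ?andbT; apply/idP/eqP => [/nodiag //|->].
      exact: Hch.
    * by rewrite samerow ?andbF //; exact: ltnW.
- by apply/subsetP => b bB; have [j ->] := S5 _ bB; rewrite Ele //; apply/imsetP; exists j.
Qed.
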